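(* Let $D$ be an oriented graph whose missing graph is a vertex-disjoint union of paths, and let $\Delta$ be its dependency digraph. Let $abc$ and $xyz$ be two distinct connected components of the missing graph, each a path with edges $ab,bc$ and $xy,yz$ respectively, such that $d^+_\Delta(ab)=d^+_\Delta(bc)=2$ and $d^-_\Delta(xy)=d^-_\Delta(yz)=2$. If $ab$ loses to $xy$, then $ab$ loses to $yz$, $bc$ loses to $xy$, and $bc$ loses to $yz$.
   Context: All digraphs are finite oriented graphs. $N^+(v)$ is the out-neighborhood; $N^{++}(v)$ is the set of vertices $w\notin N^+(v)\cup\{v\}$ with $u\to w$ for some $u\in N^+(v)$. A missing edge is a pair of distinct non-adjacent vertices; the missing graph is formed by the missing edges. For missing edges $\{x,y\},\{a,b\}$, $\{x,y\}$ loses to $\{a,b\}$ if the endpoints can be labelled so that $x\to a$, $b\notin N^+(x)\cup N^{++}(x)$, $y\to b$, $a\notin N^+(y)\cup N^{++}(y)$. The dependency digraph $\Delta$ has the missing edges as vertices and arcs $(e,e')$ whenever $e$ loses to $e'$. *)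

(* Defs.v *)
From mathcomp Require Import all_boot.
Set Implicit Arguments. Unset Strict Implicit. Unset Printing Implicit Defensive.

Definition oriented (V : finType) (arc : rel V) : Prop :=
  irreflexive arc /\ (forall u v, arc u v -> ~~ arc v u).

Section Defs.
Variables (V : finType) (arc : rel V).

Definition outN (v : V) : {set V} := [set w | arc v w].
Definition outN2 (v : V) : {set V} :=
  [set w | (w \notin outN v) && (w != v) && [exists u in outN v, arc u w]].

Definition missing (x y : V) : bool := (x != y) && ~~ arc x y && ~~ arc y x.

Definition missing_edge (e : {set V}) : bool :=
  [exists x, exists y, missing x y && (e == [set x; y])].

Definition loses_lab (x y a b : V) : bool :=
  [&& arc x a, b \notin outN x :|: outN2 x, arc y b & a \notin outN y :|: outN2 y].

Definition loses (e f : {set V}) : bool :=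
  [exists x, exists y, exists a, exists b,
    [&& e == [set x; y], f == [set a; b] & loses_lab x y a b]].

Definition dep_outdeg (e : {set V}) : nat := #|[set f | missing_edge f && loses e f]|.
Definition dep_indeg (e : {set V}) : nat := #|[set f | missing_edge f && loses f e]|.

Definition missing_union_of_paths : Prop :=
  (forall v : V, #|[set w | missing v w]| <= 2) /\
  (forall s : seq V, uniq s -> 3 <= size s -> ~~ cycle missing s).

Definition path3_component (a b c : V) : Prop :=
  [/\ uniq [:: a; b; c], missing a b & missing b c] /\
  [/\ (forall w, missing a w -> w = b),
      (forall w, missing c w -> w = b) &
      (forall w, missing b w -> w = a \/ w = c)].

End Defs.

(* Main.v *)
Require Import Defs.
From mathcomp Require Import all_boot.
Set Implicit Arguments. Unset Strict Implicit. Unset Printing Implicit Defensive.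

Section H.
Variables (V : finType) (arc : rel V).

Lemma missingC u v : missing arc u v = missing arc v u.
Proof. by rewrite /missing eq_sym andbAC. Qed.

Lemma forb p q r s : missing arc p q -> loses_lab arc p q r s ->
  (forall u, arc p u -> ~~ arc u s) /\ (forall u, arc q u -> ~~ arc u r).
Proof.
move=> /andP[/andP[npq npq1] nqp] /and4P[pr sN qs rN]; split=> u pu; apply/negP=> us.
- move: sN; rewrite /outN2 !inE => /norP[ps]; rewrite ps /=.
  have -> : s != p by apply/eqP=> E; move: qs; rewrite E (negbTE nqp).
  by rewrite /=; apply/negP/negPn/existsP; exists u; rewrite inE pu.
- move: rN; rewrite /outN2 !inE => /norP[qr]; rewrite qr /=.
  have -> : r != q by apply/eqP=> E; move: pr; rewrite E (negbTE npq1).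
  by rewrite /=; apply/negP/negPn/existsP; exists u; rewrite inE pu.
Qed.

Definition adj u v := arc u v || arc v u.

Lemma L1 p q r s r' s' : missing arc p q -> loses_lab arc p q r s ->
  loses_lab arc p q r' s' -> adj s r' -> False.
Proof.
move=> m H1 H2; have [f1 _] := forb m H1; have [_ f2] := forb m H2.
case/and4P: H1 => _ _ qs _; case/and4P: H2 => pr' _ _ _.
by case/orP => A; [move: (f2 _ qs) | move: (f1 _ pr')]; rewrite A.
Qed.

Lemma L2 p q r s r' s' : missing arc p q -> loses_lab arc p q r s ->
  loses_lab arc q p r' s' -> adj s s' -> False.
Proof.
move=> m H1 H2; have [f1 _] := forb m H1; rewrite missingC in m.
have [f2 _] := forb m H2.
case/and4P: H1 => _ _ qs _; case/and4P: H2 => _ _ ps' _.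
by case/orP => A; [move: (f2 _ qs) | move: (f1 _ ps')]; rewrite A.
Qed.

Lemma L3 p q r s p' q' : missing arc p q -> missing arc p' q' ->
  loses_lab arc p q r s -> loses_lab arc p' q' r s -> adj p q' -> False.
Proof.
move=> m m' H1 H2; have [f1 _] := forb m H1; have [_ f2] := forb m' H2.
case/and4P: H1 => pr _ _ _; case/and4P: H2 => _ _ q's _.
by case/orP => A; [move: (f1 _ A) | move: (f2 _ A)]; rewrite ?pr ?q's.
Qed.

Lemma L4 p q r s p' q' : missing arc p q -> missing arc p' q' ->
  loses_lab arc p q r s -> loses_lab arc p' q' s r -> adj p p' -> False.
Proof.
move=> m m' H1 H2; have [f1 _] := forb m H1; have [f2 _] := forb m' H2.
case/and4P: H1 => pr _ _ _; case/and4P: H2 => p's _ _ _.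
by case/orP => A; [move: (f1 _ A) | move: (f2 _ A)]; rewrite ?pr ?p's.
Qed.

Lemma set2_dec (p q a b : V) : [set p; q] = [set a; b] ->
  (p = a /\ q = b) \/ (p = b /\ q = a).
Proof.
move=> E.
have pin : p \in [set a; b] by rewrite -E !inE eqxx.
have qin : q \in [set a; b] by rewrite -E !inE eqxx orbT.
have ain : a \in [set p; q] by rewrite E !inE eqxx.
have bin : b \in [set p; q] by rewrite E !inE eqxx orbT.
move: pin qin ain bin; rewrite !inE.
by do 4 case/orP=> /eqP ?; subst; auto.
Qed.
End H.

Section H2.
Variables (V : finType) (arc : rel V).

Lemma nadj u v : ~~ adj arc u v -> u = v \/ missing arc u v.
Proof.
rewrite /adj negb_or => /andP[h1 h2]; case: (eqVneq u v) => [->|ne]; [by left|right].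
by rewrite /missing ne h1 h2.
Qed.

Lemma far1 x y z u w : path3_component arc x y z -> missing arc u w ->
  [set u; w] != [set x; y] -> [set u; w] != [set y; z] ->
  forall v, v \in [set x; y] -> adj arc u v.
Proof.
move=> [_ [hx hz hy]] m /eqP n1 /eqP n2 v vin; apply/negP=> /negP /nadj H.
have caseY : u = y -> False.
  move=> E; subst u; case: (hy _ m) => E; subst w; [apply: n1; exact: setUC|exact: n2].
have caseX : u = x -> False by move=> E; subst u; move: (hx _ m) => E; subst w; exact: n1.
move: vin; rewrite !inE => /orP[] /eqP E; subst v; case: H => [E|M].
- exact: caseX.
- by rewrite missingC in M; exact: caseY (hx _ M).
- exact: caseY.
- rewrite missingC in M; case: (hy _ M) => E; [exact: caseX|subst u].
  move: (hz _ m) => E; subst w; apply: n2; exact: setUC.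
Qed.

Lemma far x y z u w : path3_component arc x y z -> missing arc u w ->
  [set u; w] != [set x; y] -> [set u; w] != [set y; z] ->
  forall v, v \in [set x; y] -> adj arc u v /\ adj arc w v.
Proof.
move=> P m n1 n2 v vin; split; first exact: far1 P m n1 n2 v vin.
have m' : missing arc w u by rewrite missingC.
have n1' : [set w; u] != [set x; y] by rewrite setUC.
have n2' : [set w; u] != [set y; z] by rewrite setUC.
exact: (far1 P m' n1' n2' vin).
Qed.
End H2.

Section H3.
Variables (V : finType) (arc : rel V).

Lemma adjC u v : adj arc u v = adj arc v u.
Proof. by rewrite /adj orbC. Qed.

Lemma far' x y z u w s t : path3_component arc x y z -> missing arc u w ->
  [set u; w] != [set x; y] -> [set u; w] != [set y; z] ->
  s \in [set x; y] -> t \in [set u; w] -> adj arc s t.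
Proof.
move=> P m n1 n2 sin; have [h1 h2] := far P m n1 n2 sin.
by rewrite !inE => /orP[] /eqP ->; rewrite adjC.
Qed.

Lemma missing_set2 p q a b : [set a; b] = [set p; q] -> missing arc a b -> missing arc p q.
Proof. by move/set2_dec => [[-> ->]|[-> ->]] //; rewrite missingC. Qed.

Lemma me_of x y : missing arc x y -> missing_edge arc [set x; y].
Proof. by move=> m; apply/existsP; exists x; apply/existsP; exists y; rewrite m eqxx. Qed.

Lemma other (S : {set {set V}}) e : #|S| = 2 -> e \in S -> exists2 f, f \in S & f != e.
Proof.
move=> c eS; move: c; rewrite (cardsD1 e) eS => [[]] /eqP/cards1P [f Ef].
have : f \in S :\ e by rewrite Ef set11.
by rewrite !inE => /andP[fe fS]; exists f.
Qed.

Lemma OUT a b x y z : path3_component arc x y z -> missing arc a b ->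
  dep_outdeg arc [set a; b] = 2 -> loses arc [set a; b] [set x; y] ->
  loses arc [set a; b] [set y; z].
Proof.
move=> P mab deg L; case: (boolP (loses arc [set a; b] [set y; z])) => // nL; exfalso.
have mxy : missing arc x y by case: P => [[]].
have xyS : [set x; y] \in [set f | missing_edge arc f && loses arc [set a; b] f].
  by rewrite inE L me_of.
have [f] := other deg xyS.
rewrite inE => /andP[/existsP[u /existsP[w /andP[muw /eqP Ef]]] Lf] fne.
have fne2 : f != [set y; z] by apply/eqP=> E; apply: (negP nL); rewrite -E.
subst f.
case/existsP: L => p /existsP [q /existsP [r /existsP [s /and3P [/eqP e1 /eqP e2 ll1]]]].
case/existsP: Lf => p' /existsP [q' /existsP [r' /existsP [s' /and3P [/eqP e1' /eqP e2' ll2]]]].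
have mpq : missing arc p q by exact: missing_set2 e1 mab.
have sin : s \in [set x; y] by rewrite e2 !inE eqxx orbT.
have r'in : r' \in [set u; w] by rewrite e2' !inE eqxx.
have s'in : s' \in [set u; w] by rewrite e2' !inE eqxx orbT.
case: (set2_dec (etrans (esym e1') e1)) => [[E1 E2]|[E1 E2]]; subst p' q'.
- exact: (L1 mpq ll1 ll2 (far' P muw fne fne2 sin r'in)).
- exact: (L2 mpq ll1 ll2 (far' P muw fne fne2 sin s'in)).
Qed.
End H3.

Section H4.
Variables (V : finType) (arc : rel V).

Lemma IN a b c x y : path3_component arc a b c -> missing arc x y ->
  dep_indeg arc [set x; y] = 2 -> loses arc [set a; b] [set x; y] ->
  loses arc [set b; c] [set x; y].
Proof.
move=> P mxy deg L; case: (boolP (loses arc [set b; c] [set x; y])) => // nL; exfalso.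
have mab : missing arc a b by case: P => [[]].
have abS : [set a; b] \in [set f | missing_edge arc f && loses arc f [set x; y]].
  by rewrite inE L me_of.
have [f] := other deg abS.
rewrite inE => /andP[/existsP[u /existsP[w /andP[muw /eqP Ef]]] Lf] fne.
have fne2 : f != [set b; c] by apply/eqP=> E; apply: (negP nL); rewrite -E.
subst f.
case/existsP: L => p /existsP [q /existsP [r /existsP [s /and3P [/eqP e1 /eqP e2 ll1]]]].
case/existsP: Lf => p' /existsP [q' /existsP [r' /existsP [s' /and3P [/eqP e1' /eqP e2' ll2]]]].
have mpq : missing arc p q by exact: missing_set2 e1 mab.
have mpq' : missing arc p' q' by exact: missing_set2 e1' muw.
have pin : p \in [set a; b] by rewrite e1 !inE eqxx.
have p'in : p' \in [set u; w] by rewrite e1' !inE eqxx.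
have q'in : q' \in [set u; w] by rewrite e1' !inE eqxx orbT.
case: (set2_dec (etrans (esym e2') e2)) => [[E1 E2]|[E1 E2]]; subst r' s'.
- exact: (L3 mpq mpq' ll1 ll2 (far' P muw fne fne2 pin q'in)).
- exact: (L4 mpq mpq' ll1 ll2 (far' P muw fne fne2 pin p'in)).
Qed.
End H4.

Theorem lemma4p3 (V : finType) (arc : rel V) (a b c x y z : V) :
  oriented arc ->
  missing_union_of_paths arc ->
  path3_component arc a b c ->
  path3_component arc x y z ->
  [set a; b; c] != [set x; y; z] ->
  dep_outdeg arc [set a; b] = 2 ->
  dep_outdeg arc [set b; c] = 2 ->
  dep_indeg arc [set x; y] = 2 ->
  dep_indeg arc [set y; z] = 2 ->
  loses arc [set a; b] [set x; y] ->
  [/\ loses arc [set a; b] [set y; z],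
      loses arc [set b; c] [set x; y] &
      loses arc [set b; c] [set y; z]].
Proof.
move=> _ _ P1 P2 _ d1 d2 d3 _ L.
have mab : missing arc a b by case: P1 => [[]].
have mbc : missing arc b c by case: P1 => [[]].
have mxy : missing arc x y by case: P2 => [[]].
have L2 := IN P1 mxy d3 L.
by split; [exact: OUT P2 mab d1 L | exact: L2 | exact: OUT P2 mbc d2 L2].
Qed.
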